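(* Let $X$ be a complex vector space equipped with an inner product $\langle\cdot,\cdot\rangle'$. Suppose that for each $\alpha\in(0,1]$ we are given a map $\langle\cdot,\cdot\rangle_\alpha : X\times X\to\mathbb{C}$ and real constants $A_\alpha,B_\alpha$ with $0<A_\alpha\le B_\alpha<\infty$ such that for all $x,y\in X$ and all $\alpha\in(0,1]$, \[ A_\alpha\,|\langle x,y\rangle'| \le |\langle x,y\rangle_\alpha| \le B_\alpha\,|\langle x,y\rangle'|, \] and suppose moreover that $\sup_{\alpha\in(0,1]} B_\alpha/A_\alpha<\infty$. Then there exists $M\in[1,\infty)$ such that for every $\alpha\in(0,1]$, all $x,y,z\in X$ and all $k\in\mathbb{C}$: 1. $\frac{|k|}{M}|\langle x,y\rangle_\alpha|\le|\langle kx,y\rangle_\alpha|\le |k|M|\langle x,y\rangle_\alpha|$; 2. $\frac{|k|}{M}|\langle x,y\rangle_\alpha|\le|\langle x,ky\rangle_\alpha|\le |k|M|\langle x,y\rangle_\alpha|$; 3. $\frac{|k|}{M}|\langle y,x\rangle_\alpha|\le|\langle kx,y\rangle_\alpha|\le |k|M|\langle y,x\rangle_\alpha|$; 4. $\frac{|k|}{M}|\langle y,x\rangle_\alpha|\le|\langle x,ky\rangle_\alpha|\le |k|M|\langle y,x\rangle_\alpha|$; 5. $\frac{1}{M}|\langle x,ky\rangle_\alpha|\le|\langle kx,y\rangle_\alpha|\le M|\langle x,ky\rangle_\alpha|$; 6. $\frac{1}{M}|\langle kx,y\rangle_\alpha|\le|\langle x,ky\rangle_\alpha|\le M|\langle kx,y\rangle_\alpha|$;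 7. $\frac{1}{M}|\langle ky,x\rangle_\alpha|\le|\langle kx,y\rangle_\alpha|\le M|\langle ky,x\rangle_\alpha|$; 8. $\frac{1}{M}|\langle ky,x\rangle_\alpha|\le|\langle x,ky\rangle_\alpha|\le M|\langle ky,x\rangle_\alpha|$; 9. $|\langle kx+z,y\rangle_\alpha|\le M\big(|k|\,|\langle x,y\rangle_\alpha|+|\langle z,y\rangle_\alpha|\big)$; 10. $|\langle x,ky+z\rangle_\alpha|\le M\big(|k|\,|\langle x,y\rangle_\alpha|+|\langle x,z\rangle_\alpha|\big)$.
   Context: The map $\langle\cdot,\cdot\rangle_\alpha$ satisfying the two-sided bound is the paper's (simplified) ''fuzzy inner product'' relative to the classical inner product $\langle\cdot,\cdot\rangle'$. *)

(* Defs.v *)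
From mathcomp Require Import all_boot all_order all_algebra.
From mathcomp Require Import reals complex.
Import GRing.Theory Num.Theory.
Local Open Scope ring_scope.
Local Open Scope complex_scope.

Definition is_inner_product {R : realType} {V : lmodType R[i]}
  (ip : V -> V -> R[i]) : Prop :=
  [/\ forall (a : R[i]) (x y z : V), ip (a *: x + y) z = a * ip x z + ip y z,
      forall x y : V, ip y x = (ip x y)^*,
      forall x : V, 0 <= ip x x
    & forall x : V, ip x x = 0 -> x = 0].

(* Main.v *)
Require Import Defs.
From mathcomp Require Import all_boot all_order all_algebra.
From mathcomp Require Import reals complex.
Import Order.TTheory GRing.Theory Num.Theory.
Local Open Scope ring_scope.
Local Open Scope complex_scope.

Lemma normJ (R : realType) (z : R[i]) : `|z^*| = `|z|.
Proof. by rewrite !normc_def; case: z => a b /=; rewrite sqrrN. Qed.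

Lemma key (F : numFieldType) (a b m c p q : F) :
  0 < a -> 0 < m -> 0 <= c -> b <= m * a ->
  a * c <= p <= b * c -> a * c <= q <= b * c -> q / m <= p <= m * q.
Proof.
move=> a0 m0 c0 bma /andP[ap pb] /andP[aq qb].
have h1 : b * c <= m * (a * c) by rewrite mulrA ler_wpM2r.
apply/andP; split.
  rewrite ler_pdivrMr // mulrC.
  apply: (le_trans qb); apply: (le_trans h1); rewrite ler_wpM2l // ltW //.
apply: (le_trans pb); apply: (le_trans h1); rewrite ler_wpM2l // ltW //.
Qed.

Lemma key2 (F : numFieldType) (a b m k c1 c2 p q1 q2 : F) :
  0 < a -> 0 < m -> 0 <= k -> 0 <= c1 -> 0 <= c2 -> b <= m * a ->
  p <= b * (k * c1 + c2) -> a * c1 <= q1 -> a * c2 <= q2 ->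
  p <= m * (k * q1 + q2).
Proof.
move=> a0 m0 k0 c10 c20 bma pb aq1 aq2.
apply: (le_trans pb).
have h1 : b * (k * c1 + c2) <= m * a * (k * c1 + c2).
  by rewrite ler_wpM2r // addr_ge0 // mulr_ge0.
apply: (le_trans h1); rewrite -mulrA; apply: ler_wpM2l; first exact: ltW.
rewrite mulrDr mulrCA; apply: lerD => //; exact: ler_wpM2l.
Qed.

Lemma scale_bnd (F : numFieldType) (a b k c q : F) :
  0 <= k -> a * c <= q <= b * c -> a * (k * c) <= k * q <= b * (k * c).
Proof.
move=> k0 /andP[h1 h2]; rewrite !(mulrCA _ k) !ler_wpM2l //; exact/andP.
Qed.

Arguments key {F a b m c p q}.
Arguments key2 {F a b m k c1 c2 p q1 q2}.
Arguments scale_bnd {F a b k c q}.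

Lemma conv1 (F : numFieldType) (k m p q : F) :
  (k * q) / m <= p <= m * (k * q) -> k / m * q <= p <= k * m * q.
Proof. by rewrite mulrAC (mulrAC k m q) (mulrC _ m). Qed.

Theorem mainTheorem5 (R : realType) (X : lmodType R[i])
  (ip' : X -> X -> R[i]) (ip : R -> X -> X -> R[i]) (A B : R -> R) :
  is_inner_product ip' ->
  (forall a : R, 0 < a <= 1 -> 0 < A a <= B a) ->
  (forall a : R, 0 < a <= 1 -> forall x y : X,
     (A a)%:C * `|ip' x y| <= `|ip a x y| <= (B a)%:C * `|ip' x y|) ->
  (exists K : R, forall a : R, 0 < a <= 1 -> B a / A a <= K) ->
  exists M : R, 1 <= M /\
    forall a : R, 0 < a <= 1 -> forall (x y z : X) (k : R[i]),
    (`|k| / M%:C * `|ip a x y| <= `|ip a (k *: x) y| <= `|k| * M%:C * `|ip a x y|) /\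
        (`|k| / M%:C * `|ip a x y| <= `|ip a x (k *: y)| <= `|k| * M%:C * `|ip a x y|) /\
        (`|k| / M%:C * `|ip a y x| <= `|ip a (k *: x) y| <= `|k| * M%:C * `|ip a y x|) /\
        (`|k| / M%:C * `|ip a y x| <= `|ip a x (k *: y)| <= `|k| * M%:C * `|ip a y x|) /\
        (`|ip a x (k *: y)| / M%:C <= `|ip a (k *: x) y| <= M%:C * `|ip a x (k *: y)|) /\
        (`|ip a (k *: x) y| / M%:C <= `|ip a x (k *: y)| <= M%:C * `|ip a (k *: x) y|) /\
        (`|ip a (k *: y) x| / M%:C <= `|ip a (k *: x) y| <= M%:C * `|ip a (k *: y) x|) /\
        (`|ip a (k *: y) x| / M%:C <= `|ip a x (k *: y)| <= M%:C * `|ip a (k *: y) x|) /\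
        (`|ip a (k *: x + z) y| <= M%:C * (`|k| * `|ip a x y| + `|ip a z y|)) /\
      (`|ip a x (k *: y + z)| <= M%:C * (`|k| * `|ip a x y| + `|ip a x z|)).
Proof.
move=> [lin cj _ _] HAB Hb [K HK].
have ip0 : forall y, ip' 0 y = 0.
  move=> y; have := lin 1 0 0 y; rewrite scale1r addr0 mul1r => h.
  by have := congr1 (fun u => u - ip' 0 y) h; rewrite /= addrK subrr.
have ipZ : forall k x y, `|ip' (k *: x) y| = `|k| * `|ip' x y|.
  by move=> k x y; have := lin k x 0 y; rewrite addr0 ip0 addr0 => ->; rewrite normrM.
have ipC : forall x y, `|ip' y x| = `|ip' x y|.
  by move=> x y; rewrite cj normJ.
have ipZr : forall k x y, `|ip' x (k *: y)| = `|k| * `|ip' x y|.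
  by move=> k x y; rewrite ipC ipZ ipC.
have ipD : forall k x z y, `|ip' (k *: x + z) y| <= `|k| * `|ip' x y| + `|ip' z y|.
  by move=> k x z y; rewrite lin -normrM ler_normD.
have ipDr : forall k x z y, `|ip' y (k *: x + z)| <= `|k| * `|ip' y x| + `|ip' y z|.
  by move=> k x z y; rewrite ipC (ipC x) (ipC z); apply: ipD.
pose M := Num.max 1 K.
exists M; split; first by rewrite le_max lexx.
move=> a ha x y z k.
have /andP[A0 AB] := HAB a ha.
have Ac0 : 0 < (A a)%:C by rewrite ltcR.
have M0 : 0 < M%:C by rewrite ltcR (lt_le_trans ltr01) // le_max lexx.
have BM : (B a)%:C <= M%:C * (A a)%:C.
  rewrite -rmorphM lecR -ler_pdivrMr //; apply: (le_trans (HK a ha)).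
  by rewrite le_max lexx orbT.
have H := Hb a ha.
have k0 := normr_ge0 k.
have c0 : forall u v, 0 <= `|ip' u v| by move=> u v; apply: normr_ge0.
have ck0 : 0 <= `|k| * `|ip' x y| by apply: mulr_ge0.
have Hkx := H (k *: x) y; rewrite ipZ in Hkx.
have Hky := H x (k *: y); rewrite ipZr in Hky.
have Hkyx := H (k *: y) x; rewrite ipZ ipC in Hkyx.
have Hyx := H y x; rewrite ipC in Hyx.
have Sxy := scale_bnd k0 (H x y).
have Syx := scale_bnd k0 Hyx.
split; first exact/conv1/(key Ac0 M0 ck0 BM Hkx Sxy).
split; first exact/conv1/(key Ac0 M0 ck0 BM Hky Sxy).
split; first exact/conv1/(key Ac0 M0 ck0 BM Hkx Syx).
split; first exact/conv1/(key Ac0 M0 ck0 BM Hky Syx).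
split; first exact: (key Ac0 M0 ck0 BM Hkx Hky).
split; first exact: (key Ac0 M0 ck0 BM Hky Hkx).
split; first exact: (key Ac0 M0 ck0 BM Hkx Hkyx).
split; first exact: (key Ac0 M0 ck0 BM Hky Hkyx).
split.
  have /andP[_ hp] := H (k *: x + z) y.
  have /andP[h1 _] := H x y; have /andP[h2 _] := H z y.
  apply: (key2 Ac0 M0 k0 (c0 _ _) (c0 _ _) BM _ h1 h2).
  by apply: (le_trans hp); apply: ler_wpM2l; [rewrite ler0c ltW // (lt_le_trans A0) | apply: ipD].
have /andP[_ hp] := H x (k *: y + z).
have /andP[h1 _] := H x y; have /andP[h2 _] := H x z.
apply: (key2 Ac0 M0 k0 (c0 _ _) (c0 _ _) BM _ h1 h2).
by apply: (le_trans hp); apply: ler_wpM2l; [rewrite ler0c ltW // (lt_le_trans A0) | apply: ipDr].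
Qed.
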